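(* Every countable ordinal $\alpha$ is $\mathrm{VD}_*$-sum-indecomposable: if $\mathfrak A$ is a countable scattered linear ordering with $\mathrm{VD}_*(\mathfrak A)=\alpha$ and $\mathfrak A$ is a sum augmentation of linear orderings $\mathfrak B_1,\dots,\mathfrak B_n$, then some $\mathfrak B_i$ is scattered with $\mathrm{VD}_*(\mathfrak B_i)=\alpha$.
   Context: All linear orderings are countable. A linear ordering is scattered if $(\mathbb Q;<)$ does not embed into it. For a linear ordering $\mathfrak I$ and orderings $(\mathfrak A_i)_{i\in I}$, the $\mathfrak I$-sum $\sum_{i\in\mathfrak I}\mathfrak A_i$ is the disjoint union ordered lexicographically (first by index in $\mathfrak I$, then within $\mathfrak A_i$). The classes $\mathcal{VD}_\alpha$ ($\alpha$ countable ordinal): $\mathcal{VD}_0=\{\mathbf 0,\mathbf 1\}$ (empty and one-point orderings); for $\alpha>0$, $\mathcal{VD}_\alpha$ consists of all finite sums, $\omega$-sums, $\omega^*$-sums and $\zeta$-sums (indexed by $(\mathbb N;\le)$, $(\mathbb N;\ge)$, $(\mathbb Z;\le)$) of elements of $\mathcal{VD}_{<\alpha}=\bigcup_{\beta<\alpha}\mathcal{VD}_\beta$. Every countable scattered ordering lies in some $\mathcal{VD}_\alpha$. $\mathrm{VD}_*(\mathfrak A)$ for scattered $\mathfrak A$ is the least $\alpha$ such that $\mathfrak A$ is a finite sum of elements of $\mathcal{VD}_\alpha$. $\mathfrak A$ is a sum augmentation of $\mathfrak B_1,\dots,\mathfrak B_n$ if $A=A_1\uplus\dots\uplus A_n$ with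 $\mathfrak A\restriction A_i\cong\mathfrak B_i$. *)

(* Defs.v *)
From Stdlib Require Import QArith ZArith Arith.

Record LO := mkLO {
  car :> Type;
  rel : car -> car -> Prop;
  rel_irrefl : forall x, ~ rel x x;
  rel_trans : forall x y z, rel x y -> rel y z -> rel x z;
  rel_total : forall x y, x <> y -> rel x y \/ rel y x;
  car_countable : exists f : car -> nat, forall x y, f x = f y -> x = y
}.

Definition bijective {X Y : Type} (f : X -> Y) : Prop :=
  (forall x y, f x = f y -> x = y) /\ (forall y, exists x, f x = y).

Definition Iso (X : Type) (rX : X -> X -> Prop) (Y : Type) (rY : Y -> Y -> Prop) : Prop :=
  exists f : X -> Y, bijective f /\ forall x y, rX x y <-> rY (f x) (f y).

Definition scattered (A : LO) : Prop :=
  ~ exists f : Q -> car A, forall p q, (p < q)%Q -> rel A (f p) (f q).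

Definition lexlt {I : Type} (ltI : I -> I -> Prop) (F : I -> LO)
  (x y : {i : I & car (F i)}) : Prop :=
  ltI (projT1 x) (projT1 y) \/
  exists e : projT1 x = projT1 y,
    rel (F (projT1 y)) (eq_rect _ (fun i => car (F i)) (projT2 x) _ e) (projT2 y).

Definition IsSum (I : Type) (ltI : I -> I -> Prop) (F : I -> LO) (A : LO) : Prop :=
  Iso {i : I & car (F i)} (lexlt ltI F) (car A) (rel A).

Definition fin_idx (n : nat) := {k : nat | (k < n)%nat}.
Definition fin_lt {n : nat} (i j : fin_idx n) : Prop := (proj1_sig i < proj1_sig j)%nat.

(** * Countable ordinals as Brouwer trees *)
Inductive ord : Type :=
| OZ : ord
| OS : ord -> ord
| OL : (nat -> ord) -> ord.  (* supremum of a sequence *)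

Inductive ole : ord -> ord -> Prop :=
| ole_zero : forall y, ole OZ y
| ole_trans : forall x y z, ole x y -> ole y z -> ole x z
| ole_succ : forall x y, ole x y -> ole (OS x) (OS y)
| ole_cocone : forall x f k, ole x (f k) -> ole x (OL f)
| ole_limiting : forall f x, (forall k, ole (f k) x) -> ole (OL f) x.

Definition olt (x y : ord) : Prop := ole (OS x) y.

(* VD_alpha = {0,1} together with all finite/omega/omega*/zeta sums of
   elements of VD_{<alpha}; this agrees with the paper's definition
   (for alpha > 0, {0,1} = VD_0 is contained in the 1-term finite sums). *)
Inductive VD : ord -> LO -> Prop :=
| VD_zero : forall a (A : LO), (car A -> False) -> VD a A
| VD_one : forall a (A : LO), (exists x : car A, forall y, y = x) -> VD a A
| VD_fin : forall a (A : LO) n (F : fin_idx n -> LO),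
    (forall i, exists b, olt b a /\ VD b (F i)) ->
    IsSum (fin_idx n) fin_lt F A -> VD a A
| VD_omega : forall a (A : LO) (F : nat -> LO),
    (forall i, exists b, olt b a /\ VD b (F i)) ->
    IsSum nat Peano.lt F A -> VD a A
| VD_omegastar : forall a (A : LO) (F : nat -> LO),
    (forall i, exists b, olt b a /\ VD b (F i)) ->
    IsSum nat (fun i j => (j < i)%nat) F A -> VD a A
| VD_zeta : forall a (A : LO) (F : Z -> LO),
    (forall i, exists b, olt b a /\ VD b (F i)) ->
    IsSum Z Z.lt F A -> VD a A.

Definition FinSumOf (P : LO -> Prop) (A : LO) : Prop :=
  exists n (F : fin_idx n -> LO), (forall i, P (F i)) /\ IsSum (fin_idx n) fin_lt F A.

Definition VDstar_is (A : LO) (a : ord) : Prop :=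
  FinSumOf (VD a) A /\ forall b, olt b a -> ~ FinSumOf (VD b) A.

Definition sum_augmentation (A : LO) (n : nat) (B : fin_idx n -> LO) : Prop :=
  exists part : car A -> fin_idx n,
    forall i, Iso {x : car A | part x = i}
                  (fun x y => rel A (proj1_sig x) (proj1_sig y))
                  (car (B i)) (rel (B i)).

(* Main.v *)
Require Import Defs.
From Stdlib Require Import QArith ZArith Arith Lia Classical ClassicalEpsilon ProofIrrelevance.
Open Scope nat_scope.

Fixpoint ole' (x y : ord) {struct x} : Prop :=
 match x with
 | OZ => True
 | OS x' => (fix lt' (y : ord) : Prop := match y with OZ => False | OS y' => ole' x' y' | OL g => exists k, lt' (g k) end) y
 | OL f => forall k, ole' (f k) y
 end.

Lemma ole'_cocone : forall x g k, ole' x (g k) -> ole' x (OL g).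
Proof.
  induction x as [|x IH|f IH]; intros g k H; simpl in *; auto.
  exists k; exact H.
  intros j; eapply IH; eauto.
Qed.

Lemma ole'_refl : forall x, ole' x x.
Proof.
  induction x as [|x IH|f IH]; simpl; auto.
  intros k; eapply ole'_cocone; apply IH.
Qed.

Lemma ole'_trans : forall x y z, ole' x y -> ole' y z -> ole' x z.
Proof.
  induction x as [|x IHx|f IHf]; intros y z H1 H2.
  - exact I.
  - revert z H1 H2. induction y as [|y IHy|g IHg]; intros z H1 H2.
    + simpl in H1. destruct H1.
    + revert H2. induction z as [|z IHz|h IHh]; intros H2.
      * simpl in H2. destruct H2.
      * simpl in *. eapply IHx; eauto.
      * simpl in H2. destruct H2 as [k Hk]. simpl. exists k. apply IHh. exact Hk.
    + simpl in H1. destruct H1 as [k Hk]. simpl in H2. eapply IHg. exact Hk. apply H2.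
  - simpl in *. intros k. eapply IHf; eauto.
Qed.

Lemma ole_sound : forall x y, ole x y -> ole' x y.
Proof.
  intros x y H; induction H.
  - exact I.
  - eapply ole'_trans; eauto.
  - exact IHole.
  - eapply ole'_cocone; eauto.
  - simpl. exact H0.
Qed.

Lemma ole_complete : forall x y, ole' x y -> ole x y.
Proof.
  induction x as [|x IHx|f IHf]; intros y H.
  - constructor.
  - induction y as [|y IHy|g IHg].
    + destruct H.
    + constructor. apply IHx. exact H.
    + destruct H as [k Hk]. eapply ole_cocone. apply IHg. exact Hk.
  - constructor. intros k. apply IHf. apply H.
Qed.

Lemma ole_refl : forall x, ole x x.
Proof. intros; apply ole_complete, ole'_refl. Qed.

Lemma ole_succ_inv : forall a b, ole (OS a) (OS b) -> ole a b.
Proof. intros a b H. apply ole_complete. apply ole_sound in H. exact H. Qed.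

Lemma olt_irrefl : forall x, ~ olt x x.
Proof.
  unfold olt; intros x H; apply ole_sound in H; revert H.
  induction x as [|x IH|f IH]; intros H.
  - exact H.
  - apply IH. exact H.
  - simpl in H. destruct H as [k Hk].
    apply (IH k).
    assert (H1 : ole' (f k) (OL f)) by (eapply ole'_cocone; apply ole'_refl).
    change (ole' (OS (f k)) (OS (OL f))) in H1.
    eapply ole'_trans; eauto.
Qed.

Lemma ole_S : forall x, ole x (OS x).
Proof.
  induction x as [|x IH|f IH].
  - constructor.
  - constructor. exact IH.
  - constructor. intros k. eapply ole_trans. apply IH.
    constructor. eapply ole_cocone. apply ole_refl.
Qed.

Lemma olt_ole : forall x y, olt x y -> ole x y.
Proof. unfold olt; intros; eapply ole_trans. apply ole_S. exact H. Qed.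

Lemma olt_ole_trans : forall x y z, olt x y -> ole y z -> olt x z.
Proof. unfold olt; intros; eapply ole_trans; eauto. Qed.

Lemma ole_olt_trans : forall x y z, ole x y -> olt y z -> olt x z.
Proof. unfold olt; intros; eapply ole_trans. constructor. eauto. auto. Qed.

Lemma ole_total : forall x y, ole x y \/ olt y x.
Proof.
  induction x as [|x IHx|f IHf]; intros y.
  - left; constructor.
  - induction y as [|y IHy|g IHg].
    + right. unfold olt. constructor. constructor.
    + destruct (IHx y) as [H|H].
      * left. constructor. exact H.
      * right. unfold olt in *. constructor. exact H.
    + destruct (classic (exists k, ole (OS x) (g k))) as [[k Hk]|Hn].
      * left. eapply ole_cocone; eauto.
      * right. unfold olt. constructor. constructor. intros k.
        destruct (IHg k) as [H|H]. exfalso; eauto.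
        apply ole_succ_inv. exact H.
  - destruct (classic (forall k, ole (f k) y)) as [H|H].
    + left. constructor. exact H.
    + apply not_all_ex_not in H. destruct H as [k Hk].
      destruct (IHf k y) as [H|H]. contradiction.
      right. unfold olt in *. eapply ole_cocone. exact H.
Qed.

Lemma olt_wf : well_founded olt.
Proof.
  assert (down : forall x y, Acc olt y -> ole x y -> Acc olt x).
  { intros x y Ha Hxy. constructor. intros z Hz. apply (Acc_inv Ha).
    eapply olt_ole_trans; eauto. }
  intros x; induction x as [|x IH|f IH].
  - constructor. intros z Hz. apply ole_sound in Hz. destruct Hz.
  - constructor. intros z Hz. eapply down. exact IH. apply ole_succ_inv. exact Hz.
  - constructor. intros z Hz.
    destruct (classic (exists k, ole (OS z) (f k))) as [[k Hk]|Hn].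
    + apply (Acc_inv (IH k)). exact Hk.
    + exfalso. apply (olt_irrefl z). eapply olt_ole_trans. exact Hz.
      constructor. intros k. destruct (ole_total (OS z) (f k)) as [H|H].
      exfalso; eauto. apply ole_succ_inv. exact H.
Qed.

Lemma olt_direct : forall a b1 b2, olt b1 a -> olt b2 a ->
  exists c, olt c a /\ ole b1 c /\ ole b2 c.
Proof.
  intros a b1 b2 H1 H2. destruct (ole_total b1 b2) as [H|H].
  - exists b2; repeat split; auto using ole_refl.
  - exists b1; repeat split; auto using ole_refl, olt_ole.
Qed.

Lemma olt_direct_fin : forall a (g : nat -> ord) N, (forall i, i <= N -> olt (g i) a) ->
  exists c, olt c a /\ forall i, i <= N -> ole (g i) c.
Proof.
  intros a g N; induction N; intros H.
  - exists (g 0). split. apply H; lia. intros i Hi. replace i with 0 by lia. apply ole_refl.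
  - destruct IHN as [c [Hc1 Hc2]]. intros; apply H; lia.
    destruct (olt_direct a c (g (S N))) as [d [Hd1 [Hd2 Hd3]]]; auto.
    exists d; split; auto. intros i Hi. destruct (Nat.eq_dec i (S N)). subst; auto.
    eapply ole_trans. apply Hc2. lia. auto.
Qed.

Lemma fchoice {A B : Type} (R : A -> B -> Prop) : (forall a, exists b, R a b) -> exists f, forall a, R a (f a).
Proof. intros H. exists (fun a => proj1_sig (constructive_indefinite_description _ (H a))).
  intros a. exact (proj2_sig (constructive_indefinite_description _ (H a))). Qed.

Definition le {T} (lt : T -> T -> Prop) x y := lt x y \/ x = y.

Inductive VDs {T : Type} (lt : T -> T -> Prop) : ord -> (T -> Prop) -> Prop :=
| VDs_zero : forall a S, (forall x, ~ S x) -> VDs lt a S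
| VDs_one : forall a S x, S x -> (forall y, S y -> y = x) -> VDs lt a S
| VDs_sum : forall a S (blk : T -> Z) (b : Z -> ord),
    (forall x y, S x -> S y -> lt x y -> (blk x <= blk y)%Z) ->
    (forall z, olt (b z) a) ->
    (forall z, VDs lt (b z) (fun x => S x /\ blk x = z)) -> VDs lt a S.

Definition FSs {T} (lt : T -> T -> Prop) a (S : T -> Prop) :=
  exists n (c : T -> nat), (forall x, S x -> c x < n) /\
    (forall x y, S x -> S y -> lt x y -> c x <= c y) /\
    forall k, VDs lt a (fun x => S x /\ c x = k).

Section Basic.
Context {T : Type} (lt : T -> T -> Prop).

Lemma VDs_ext : forall a S, VDs lt a S -> forall S', (forall x, S x <-> S' x) -> VDs lt a S'.
Proof.
  intros a S H; induction H; intros S' E.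
  - apply VDs_zero. intros x Hx. apply (H x). apply E; auto.
  - apply (VDs_one _ _ _ x). apply E; auto. intros y Hy. apply H0. apply E; auto.
  - apply (VDs_sum _ _ _ blk b). intros x y Hx Hy. apply H; apply E; auto.
    auto. intros z. apply H2. intros x. rewrite E. tauto.
Qed.

Lemma VDs_subsingleton : forall a S, (forall x y, S x -> S y -> x = y) -> VDs lt a S.
Proof.
  intros a S H. destruct (classic (exists x, S x)) as [[x Hx]|Hn].
  - apply (VDs_one _ _ _ x Hx). intros y Hy; apply H; auto.
  - apply VDs_zero. intros x Hx; apply Hn; eauto.
Qed.

Lemma VDs_sub : forall a S, VDs lt a S -> forall S', (forall x, S' x -> S x) -> VDs lt a S'.
Proof.
  intros a S H; induction H; intros S' E.
  - apply VDs_zero. intros x Hx. apply (H x). auto.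
  - apply VDs_subsingleton. intros u v Hu Hv. rewrite (H0 u), (H0 v); auto.
  - apply (VDs_sum _ _ _ blk b). intros x y Hx Hy. apply H; auto.
    auto. intros z. apply H2. intros x [Hx Hz]. auto.
Qed.

Lemma VDs_level : forall a S, VDs lt a S -> forall a', ole a a' -> VDs lt a' S.
Proof.
  intros a S H; induction H; intros a' Ha.
  - apply VDs_zero; auto.
  - eapply VDs_one; eauto.
  - apply (VDs_sum _ _ _ blk b); auto. intros z; eapply olt_ole_trans; eauto.
Qed.

Lemma VDs_sum' : forall a S (blk : T -> Z),
    (forall x y, S x -> S y -> lt x y -> (blk x <= blk y)%Z) ->
    (forall z, exists b, olt b a /\ VDs lt b (fun x => S x /\ blk x = z)) -> VDs lt a S.
Proof.
  intros a S blk Hm H. apply fchoice in H. destruct H as [b Hb].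
  apply (VDs_sum _ _ _ blk b); auto; intros z; apply Hb.
Qed.

Lemma VDs_nopred : forall a S, VDs lt a S -> ~ (exists g, olt g a) -> forall x y, S x -> S y -> x = y.
Proof.
  intros a S H; destruct H; intros Hn u v Hu Hv.
  - exfalso; eapply H; eauto.
  - rewrite (H0 u), (H0 v); auto.
  - exfalso. apply Hn. exists (b 0%Z). auto.
Qed.

Lemma FSs_ext : forall a S, FSs lt a S -> forall S', (forall x, S x <-> S' x) -> FSs lt a S'.
Proof.
  intros a S [n [c [H1 [H2 H3]]]] S' E. exists n, c. repeat split.
  - intros x Hx; apply H1, E, Hx.
  - intros x y Hx Hy; apply H2; apply E; auto.
  - intros k. eapply VDs_ext. apply (H3 k). intros x. cbv beta. rewrite E. tauto.
Qed.

Lemma FSs_sub : forall a S, FSs lt a S -> forall S', (forall x, S' x -> S x) -> FSs lt a S'.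
Proof.
  intros a S [n [c [H1 [H2 H3]]]] S' E. exists n, c. repeat split.
  - intros x Hx; apply H1, E, Hx.
  - intros x y Hx Hy; apply H2; apply E; auto.
  - intros k. eapply VDs_sub. apply (H3 k). intros x [Hx Hk]. auto.
Qed.

Lemma FSs_level : forall a S, FSs lt a S -> forall a', ole a a' -> FSs lt a' S.
Proof.
  intros a S [n [c [H1 [H2 H3]]]] a' Ha. exists n, c. repeat split; auto.
  intros k; eapply VDs_level; eauto.
Qed.

Lemma FSs_of_VDs : forall a S, VDs lt a S -> FSs lt a S.
Proof.
  intros a S H. exists 1, (fun _ => 0). repeat split; auto.
  intros k. destruct k. eapply VDs_ext. exact H. intros x; split; [intro; split; auto | intros [? ?]; auto].
  apply VDs_zero. intros x [_ Hx]; discriminate.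
Qed.

Lemma FSs_subsingleton : forall a S, (forall x y, S x -> S y -> x = y) -> FSs lt a S.
Proof. intros; apply FSs_of_VDs, VDs_subsingleton; auto. Qed.

End Basic.

Lemma VDs_dual {T} (lt : T -> T -> Prop) : forall a S, VDs lt a S -> VDs (fun x y => lt y x) a S.
Proof.
  intros a S H; induction H.
  - apply VDs_zero; auto.
  - eapply VDs_one; eauto.
  - apply (VDs_sum _ _ _ (fun x => - blk x)%Z (fun z => b (- z)%Z)).
    + intros x y Hx Hy Hxy. specialize (H y x Hy Hx Hxy). lia.
    + auto.
    + intros z. eapply VDs_ext. apply (H2 (- z)%Z). intros x; cbv beta; split; intros [? ?]; split; auto; lia.
Qed.

Lemma FSs_dual {T} (lt : T -> T -> Prop) : forall a S, FSs lt a S -> FSs (fun x y => lt y x) a S.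
Proof.
  intros a S [n [c [H1 [H2 H3]]]]. exists n, (fun x => n - 1 - c x). repeat split.
  - intros x Hx; specialize (H1 x Hx); lia.
  - intros x y Hx Hy Hxy; specialize (H2 y x Hy Hx Hxy); lia.
  - intros k. destruct (le_lt_dec n k).
    + apply VDs_zero. intros x [Hx Hk]. specialize (H1 x Hx). lia.
    + eapply VDs_ext. apply VDs_dual. apply (H3 (n - 1 - k)).
      intros x. split; intros [Hx Hk]; split; auto; specialize (H1 x Hx); lia.
Qed.

Definition itv {T} (lt : T -> T -> Prop) (S : T -> Prop) x y := fun u => S u /\ le lt x u /\ le lt u y.

Section Order.
Context {T : Type} (lt : T -> T -> Prop).
Hypothesis lt_irr : forall x, ~ lt x x.
Hypothesis lt_tr : forall x y z, lt x y -> lt y z -> lt x z.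
Hypothesis lt_tot : forall x y, x <> y -> lt x y \/ lt y x.

Lemma le_tr : forall x y z, le lt x y -> le lt y z -> le lt x z.
Proof. unfold le; intros x y z [H|H] [H'|H']; subst; eauto. Qed.
Lemma le_refl : forall x, le lt x x.
Proof. right; auto. Qed.
Lemma le_antisym : forall x y, le lt x y -> le lt y x -> x = y.
Proof. unfold le; intros x y [H|H] [H1|H1]; subst; auto. exfalso; apply (lt_irr x); eauto. Qed.
Lemma le_lt_tot : forall x y, le lt x y \/ lt y x.
Proof. intros x y. destruct (classic (x = y)). left; right; auto.
  destruct (lt_tot x y H); [left; left|right]; auto. Qed.
Lemma le_lt_tr : forall x y z, le lt x y -> lt y z -> lt x z.
Proof. unfold le; intros x y z [H|H] H'; subst; eauto. Qed.
Lemma lt_le_tr : forall x y z, lt x y -> le lt y z -> lt x z.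
Proof. unfold le; intros x y z H [H'|H']; subst; eauto. Qed.
Lemma not_le_lt : forall x y, ~ le lt x y -> lt y x.
Proof. intros x y H. destruct (le_lt_tot x y); tauto. Qed.
Lemma lt_not_le : forall x y, lt x y -> ~ le lt y x.
Proof. intros x y H [H1|H1]; subst. apply (lt_irr x); eauto. apply (lt_irr x); auto. Qed.

Lemma mono_le_Z : forall (S : T -> Prop) (f : T -> Z), (forall x y, S x -> S y -> lt x y -> (f x <= f y)%Z) ->
  forall x y, S x -> S y -> le lt x y -> (f x <= f y)%Z.
Proof. intros S f H x y Hx Hy [Hl|He]; subst; auto; lia. Qed.
Lemma mono_le_N : forall (S : T -> Prop) (f : T -> nat), (forall x y, S x -> S y -> lt x y -> f x <= f y) ->
  forall x y, S x -> S y -> le lt x y -> f x <= f y.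
Proof. intros S f H x y Hx Hy [Hl|He]; subst; auto; lia. Qed.

Lemma interval_lemma : forall beta C, VDs lt beta C -> forall w z, C w -> C z -> le lt w z ->
  w = z \/ exists g, olt g beta /\ FSs lt g (itv lt C w z).
Proof.
  intros beta C H. destruct H as [a S H|a S x H H0|a S blk b Hm Hb Hv]; intros w z Hw Hz Hwz.
  - exfalso; eapply H; eauto.
  - left. rewrite (H0 w), (H0 z); auto.
  - right. set (z0 := blk w).
    assert (Hwz' : (blk w <= blk z)%Z) by (eapply mono_le_Z; eauto).
    set (N := Z.to_nat (blk z - z0)).
    destruct (olt_direct_fin a (fun i => b (z0 + Z.of_nat i)%Z) N) as [g [Hg1 Hg2]].
    { intros; apply Hb. }
    exists g; split; auto.
    exists (Datatypes.S N), (fun u => Z.to_nat (blk u - z0)). repeat split.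
    + intros u [Hu [H1 H2]].
      assert ((blk w <= blk u)%Z) by (eapply mono_le_Z; eauto).
      assert ((blk u <= blk z)%Z) by (eapply mono_le_Z; eauto). unfold N. lia.
    + intros u v [Hu [H1 H2]] [Hv' [H3 H4]] Huv.
      assert ((blk u <= blk v)%Z) by (apply Hm; auto). lia.
    + intros k. destruct (le_lt_dec k N).
      * eapply VDs_sub. eapply VDs_level. apply (Hv (z0 + Z.of_nat k)%Z). apply Hg2; auto.
        intros u [[Hu [H1 H2]] Hk]. split; auto.
        assert ((blk w <= blk u)%Z) by (eapply mono_le_Z; eauto). unfold z0 in *; lia.
      * apply VDs_zero. intros u [[Hu [H1 H2]] Hk].
        assert ((blk w <= blk u)%Z) by (eapply mono_le_Z; eauto).
        assert ((blk u <= blk z)%Z) by (eapply mono_le_Z; eauto). unfold N, z0 in *; lia.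
Qed.

End Order.

Fixpoint off (n : nat -> nat) (m : nat) : nat := match m with 0 => 0 | Datatypes.S m => off n m + n m end.
Lemma off_mono : forall n m m', m <= m' -> off n m <= off n m'.
Proof. intros n m m' H; induction H; simpl; lia. Qed.

Definition pick {T} (Q : T -> Prop) : option T :=
  match excluded_middle_informative (exists x, Q x) with
  | left H => Some (proj1_sig (constructive_indefinite_description _ H))
  | right _ => None end.
Lemma pick_some {T} (Q : T -> Prop) x : pick Q = Some x -> Q x.
Proof. unfold pick. destruct (excluded_middle_informative _); intros E; [|discriminate].
  injection E; intros; subst. apply proj2_sig. Qed.
Lemma pick_ex {T} (Q : T -> Prop) : (exists x, Q x) -> exists x, pick Q = Some x.
Proof. unfold pick. destruct (excluded_middle_informative _); intros E; [|contradiction]. eauto. Qed.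

Lemma least_nat : forall Q : nat -> Prop, (exists n, Q n) -> exists n, Q n /\ forall k, Q k -> n <= k.
Proof.
  intros Q [n Hn]. induction n as [n IH] using (well_founded_induction lt_wf).
  destruct (classic (exists k, k < n /\ Q k)) as [[k [Hk1 Hk2]]|Hno].
  - apply (IH k); auto.
  - exists n; split; auto. intros k Hk. destruct (le_lt_dec n k); auto. exfalso; eauto.
Qed.

Fixpoint useq {T} (lt : T -> T -> Prop) (e : nat -> option T) (x0 : T) (n : nat) : T :=
  match n with
  | 0 => x0
  | Datatypes.S n => match e n with
            | Some x => if excluded_middle_informative (lt (useq lt e x0 n) x) then x else useq lt e x0 n
            | None => useq lt e x0 n end
  end.

Section Half.
Context {T : Type} (lt : T -> T -> Prop).
Hypothesis lt_irr : forall x, ~ lt x x.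
Hypothesis lt_tr : forall x y z, lt x y -> lt y z -> lt x z.
Hypothesis lt_tot : forall x y, x <> y -> lt x y \/ lt y x.

Lemma flatten : forall beta (P : T -> Prop) (blk : T -> nat),
  (exists g0, olt g0 beta) ->
  (forall x y, P x -> P y -> lt x y -> blk x <= blk y) ->
  (forall m, exists g, olt g beta /\ FSs lt g (fun x => P x /\ blk x = m)) ->
  exists L : T -> Z, (forall x y, P x -> P y -> lt x y -> (L x <= L y)%Z) /\ (forall x, P x -> (0 <= L x)%Z) /\
     forall z, exists b, olt b beta /\ VDs lt b (fun x => P x /\ L x = z).
Proof.
  intros beta P blk [g0 Hg0] Hm Hb.
  apply fchoice in Hb. destruct Hb as [G HG].
  assert (H2 : forall m, exists p : nat * (T -> nat), (forall x, P x /\ blk x = m -> snd p x < fst p) /\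
    (forall x y, P x /\ blk x = m -> P y /\ blk y = m -> lt x y -> snd p x <= snd p y) /\
    forall k, VDs lt (G m) (fun x => (P x /\ blk x = m) /\ snd p x = k)).
  { intros m. destruct (HG m) as [_ [n [c Hc]]]. exists (n, c). exact Hc. }
  apply fchoice in H2. destruct H2 as [pc Hpc].
  set (nf := fun m => fst (pc m)). set (cf := fun m => snd (pc m)).
  set (L := fun x => Z.of_nat (off nf (blk x) + cf (blk x) x)).
  assert (Hbd : forall x, P x -> cf (blk x) x < nf (blk x)).
  { intros x Hx. apply (proj1 (Hpc (blk x))). auto. }
  assert (Hlt : forall x y, P x -> P y -> blk x < blk y -> (L x < L y)%Z).
  { intros x y Hx Hy H. unfold L. specialize (Hbd x Hx).
    assert (off nf (Datatypes.S (blk x)) <= off nf (blk y)) by (apply off_mono; lia).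
    simpl in H0. lia. }
  exists L. split; [|split].
  - intros x y Hx Hy Hxy. specialize (Hm x y Hx Hy Hxy).
    destruct (Nat.eq_dec (blk x) (blk y)) as [E|E].
    + unfold L. rewrite E. assert (cf (blk y) x <= cf (blk y) y).
      { apply (proj1 (proj2 (Hpc (blk y)))); auto. }
      lia.
    + assert (L x < L y)%Z by (apply Hlt; auto; lia). lia.
  - intros x Hx. unfold L. lia.
  - intros z. destruct (classic (exists x, P x /\ L x = z)) as [[x [Hx Hz]]|Hno].
    + exists (G (blk x)). split. apply HG.
      eapply VDs_sub. apply (proj2 (proj2 (Hpc (blk x))) (cf (blk x) x)).
      intros y [Hy Hyz].
      assert (E : blk y = blk x).
      { destruct (lt_eq_lt_dec (blk y) (blk x)) as [[E|E]|E]; auto.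
        - specialize (Hlt y x Hy Hx E). lia.
        - specialize (Hlt x y Hx Hy E). lia. }
      split. split; auto. fold (cf (blk x)). unfold L in Hz, Hyz. rewrite E in Hyz. lia.
    + exists g0. split; auto. apply VDs_zero. intros x Hx. apply Hno. eauto.
Qed.

Hypothesis countable : exists f : T -> nat, forall x y, f x = f y -> x = y.

Lemma half : forall beta (K : T -> Prop) x0, K x0 -> (exists g0, olt g0 beta) ->
  (forall x y, K x -> K y -> le lt x y -> x = y \/ exists g, olt g beta /\ FSs lt g (itv lt K x y)) ->
  exists L : T -> Z,
    (forall x y, K x /\ le lt x0 x -> K y /\ le lt x0 y -> lt x y -> (L x <= L y)%Z) /\
    (forall x, K x /\ le lt x0 x -> (0 <= L x)%Z) /\
    forall z, exists b, olt b beta /\ VDs lt b (fun x => (K x /\ le lt x0 x) /\ L x = z).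
Proof.
  intros beta K x0 Hx0 [g0 Hg0] HK.
  set (P := fun x => K x /\ le lt x0 x).
  destruct countable as [f Hf].
  set (e := fun n => pick (fun x => P x /\ f x = n)).
  set (u := useq lt e x0).
  assert (Pu : forall n, P (u n)).
  { induction n. split; auto. apply le_refl.
    unfold u; simpl; fold u. destruct (e n) eqn:E. destruct (excluded_middle_informative _); auto.
    apply pick_some in E. apply E. auto. }
  assert (Us : forall n, le lt (u n) (u (Datatypes.S n))).
  { intros n. unfold u at 2; simpl; fold u. destruct (e n) eqn:E. destruct (excluded_middle_informative _).
    left; auto. apply le_refl. apply le_refl. }
  assert (Um : forall n m, n <= m -> le lt (u n) (u m)).
  { intros n m H; induction H. apply le_refl. eapply le_tr; eauto. }
  assert (Ucof : forall x, P x -> le lt x (u (Datatypes.S (f x)))).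
  { intros x Hx. assert (Hex : exists y, pick (fun y => P y /\ f y = f x) = Some y).
    { apply pick_ex. exists x; auto. }
    destruct Hex as [y Hy].
    assert (y = x). { apply pick_some in Hy. apply Hf. apply Hy. } subst y.
    unfold u; simpl; fold u. change (pick (fun y : T => P y /\ f y = f x)) with (e (f x)) in Hy. rewrite Hy. destruct (excluded_middle_informative _).
    apply le_refl. destruct (le_lt_tot lt lt_tot x (u (f x))) as [H'|H']; auto; contradiction. }
  assert (Hblk : forall x, exists m, P x -> le lt x (u m) /\ forall k, le lt x (u k) -> m <= k).
  { intros x. destruct (classic (P x)) as [Hx|Hx].
    - destruct (least_nat (fun m => le lt x (u m))) as [m Hm]. eauto. exists m; auto.
    - exists 0; tauto. }
  apply fchoice in Hblk. destruct Hblk as [blk Hblk].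
  apply (flatten beta P blk).
  - eauto.
  - intros x y Hx Hy Hxy. destruct (le_lt_dec (blk x) (blk y)) as [H|H]; auto. exfalso.
    destruct (Hblk y Hy) as [Hy1 _]. destruct (Hblk x Hx) as [_ Hx2].
    destruct (le_lt_tot lt lt_tot x (u (blk y))) as [H'|H'].
    + specialize (Hx2 _ H'). lia.
    + apply (lt_irr y). eapply le_lt_tr; eauto.
  - intros m. destruct m as [|m].
    + exists g0; split; auto. apply FSs_subsingleton. intros x y [Px Hx0'] [Py Hy0'].
      destruct (Hblk x Px) as [H1 _]. destruct (Hblk y Py) as [H2 _].
      rewrite Hx0' in H1. rewrite Hy0' in H2. simpl in H1, H2.
      apply (le_antisym lt lt_irr lt_tr) in H1; [|apply Px]. apply (le_antisym lt lt_irr lt_tr) in H2; [|apply Py].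
      congruence.
    + assert (Hsub : forall x, P x /\ blk x = Datatypes.S m -> itv lt K (u m) (u (Datatypes.S m)) x /\ lt (u m) x).
      { intros x [Hx Hbx]. destruct (Hblk x Hx) as [H1 H2]. rewrite Hbx in H1.
        assert (lt (u m) x). { apply (not_le_lt lt lt_tot). intros H. specialize (H2 m H). lia. }
        split; auto. split. apply Hx. split; auto. left; auto. }
      destruct (HK (u m) (u (Datatypes.S m))) as [E|[g [Hg1 Hg2]]]; try apply Pu; auto.
      * exists g0; split; auto. apply FSs_subsingleton. intros x y Hx Hy.
        exfalso. destruct (Hsub x Hx) as [[_ [_ H1]] H2]. rewrite <- E in H1.
        apply (lt_not_le lt lt_irr lt_tr _ _ H2); auto.
      * exists g; split; auto. eapply FSs_sub. exact Hg2. intros x Hx. apply Hsub; auto.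
Qed.

End Half.

Section Class.
Context {T : Type} (lt : T -> T -> Prop).
Hypothesis lt_irr : forall x, ~ lt x x.
Hypothesis lt_tr : forall x y z, lt x y -> lt y z -> lt x z.
Hypothesis lt_tot : forall x y, x <> y -> lt x y \/ lt y x.
Hypothesis countable : exists f : T -> nat, forall x y, f x = f y -> x = y.

Let lt' := fun a b => lt b a.
Lemma lt'_irr : forall x, ~ lt' x x. Proof. unfold lt'; auto. Qed.
Lemma lt'_tr : forall x y z, lt' x y -> lt' y z -> lt' x z. Proof. unfold lt'; eauto. Qed.
Lemma lt'_tot : forall x y, x <> y -> lt' x y \/ lt' y x. Proof. unfold lt'; intros; destruct (lt_tot x y); auto. Qed.

Lemma class_lemma : forall beta K,
  (forall x y, K x -> K y -> le lt x y -> x = y \/ exists g, olt g beta /\ FSs lt g (itv lt K x y)) ->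
  VDs lt beta K.
Proof.
  intros beta K HK.
  destruct (classic (forall x y, K x -> K y -> x = y)) as [Hs|Hs].
  { apply VDs_subsingleton; auto. }
  assert (Hg0 : exists x y, K x /\ K y /\ x <> y).
  { apply NNPP; intros Hn; apply Hs; intros x y Hx Hy; apply NNPP; intros Hxy; apply Hn; eauto. }
  destruct Hg0 as [x0 [y0 [Hx0 [Hy0 Hne]]]].
  assert (G0 : exists g0, olt g0 beta).
  { destruct (lt_tot x0 y0 Hne) as [H|H].
    - destruct (HK x0 y0) as [E|[g [Hg _]]]; auto. left; auto. contradiction. eauto.
    - destruct (HK y0 x0) as [E|[g [Hg _]]]; auto. left; auto. congruence. eauto. }
  destruct (half lt lt_irr lt_tr lt_tot countable beta K x0 Hx0 G0 HK) as [L1 [M1 [N1 B1]]].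
  assert (HK' : forall x y, K x -> K y -> le lt' x y -> x = y \/ exists g, olt g beta /\ FSs lt' g (itv lt' K x y)).
  { intros x y Hx Hy Hxy. destruct (HK y x Hy Hx) as [E|[g [Hg1 Hg2]]].
    - destruct Hxy; [left; auto|right; auto].
    - left; auto.
    - right. exists g; split; auto. eapply FSs_ext. apply FSs_dual. exact Hg2.
      intros u. unfold itv, le, lt'. split; intros [A [B C]]; repeat split; auto;
        destruct B; destruct C; auto. }
  destruct (half lt' lt'_irr lt'_tr lt'_tot countable beta K x0 Hx0 G0 HK') as [L2 [M2 [N2 B2]]].
  set (L := fun x => if excluded_middle_informative (le lt x0 x) then L1 x else (- L2 x - 1)%Z).
  assert (Lp : forall x, le lt x0 x -> L x = L1 x).
  { intros x H. unfold L. destruct (excluded_middle_informative _); tauto. }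
  assert (Ln : forall x, ~ le lt x0 x -> L x = (- L2 x - 1)%Z).
  { intros x H. unfold L. destruct (excluded_middle_informative _); tauto. }
  assert (Hop : forall x, ~ le lt x0 x -> le lt' x0 x).
  { intros x H. left. apply (not_le_lt lt lt_tot); auto. }
  apply (VDs_sum' lt beta K L).
  - intros x y Hx Hy Hxy.
    destruct (classic (le lt x0 x)) as [Ax|Ax]; destruct (classic (le lt x0 y)) as [Ay|Ay].
    + rewrite Lp, Lp; auto.
    + exfalso. apply Ay. eapply (le_tr lt lt_tr). exact Ax. left; auto.
    + rewrite Ln, Lp; auto. specialize (N1 y (conj Hy Ay)). specialize (N2 x (conj Hx (Hop x Ax))). lia.
    + rewrite Ln, Ln; auto. specialize (M2 y x (conj Hy (Hop y Ay)) (conj Hx (Hop x Ax)) Hxy). lia.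
  - intros z. destruct (Z_le_gt_dec 0 z) as [Hz|Hz].
    + destruct (B1 z) as [b [Hb1 Hb2]]. exists b; split; auto. eapply VDs_sub. exact Hb2.
      intros x [Hx Hxz]. destruct (classic (le lt x0 x)) as [Ax|Ax].
      * rewrite Lp in Hxz; auto.
      * rewrite Ln in Hxz; auto. specialize (N2 x (conj Hx (Hop x Ax))). lia.
    + destruct (B2 (- z - 1)%Z) as [b [Hb1 Hb2]]. exists b; split; auto.
      apply VDs_dual in Hb2. eapply VDs_sub. exact Hb2.
      intros x [Hx Hxz]. destruct (classic (le lt x0 x)) as [Ax|Ax].
      * rewrite Lp in Hxz; auto. specialize (N1 x (conj Hx Ax)). lia.
      * rewrite Ln in Hxz; auto. split. split; auto. lia.
Qed.

Lemma final_step : forall beta S (c : T -> nat) N, (forall x, S x -> c x < N) ->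
  (forall x y, S x -> S y -> lt x y -> c x <= c y) ->
  (forall x y, S x -> S y -> le lt x y -> c x = c y -> x = y \/ exists g, olt g beta /\ FSs lt g (itv lt S x y)) ->
  FSs lt beta S.
Proof.
  intros beta S c N Hb Hm Hp. exists N, c. repeat split; auto.
  intros k. apply class_lemma. intros x y [Hx Hxk] [Hy Hyk] Hxy.
  destruct (Hp x y Hx Hy Hxy) as [E|[g [Hg1 Hg2]]]. congruence. left; auto.
  right. exists g. split; auto. eapply FSs_sub. exact Hg2. intros u [[Hu _] Hu2]. split; auto.
Qed.

End Class.

Fixpoint sumind (P : nat -> Prop) (n : nat) : nat :=
  match n with 0 => 0 | Datatypes.S n => sumind P n + (if excluded_middle_informative (P n) then 1 else 0) end.

Lemma sumind_mono : forall P Q n, (forall l, l < n -> P l -> Q l) -> sumind P n <= sumind Q n.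
Proof.
  intros P Q n; induction n; intros H; simpl; auto.
  specialize (IHn (fun l Hl => H l (Nat.lt_lt_succ_r _ _ Hl))).
  destruct (excluded_middle_informative (P n)); destruct (excluded_middle_informative (Q n)); try lia.
  exfalso; eauto.
Qed.

Lemma sumind_eq : forall P Q n, (forall l, l < n -> P l -> Q l) -> sumind P n = sumind Q n ->
  forall l, l < n -> Q l -> P l.
Proof.
  intros P Q n; induction n; intros H E l Hl Hq; [lia|]. simpl in E.
  assert (H' : forall l, l < n -> P l -> Q l) by (intros; apply H; auto).
  pose proof (sumind_mono P Q n H').
  destruct (excluded_middle_informative (P n)); destruct (excluded_middle_informative (Q n)); try (exfalso; eauto; fail).
  - destruct (Nat.eq_dec l n). subst; auto. apply IHn; auto. lia. lia.
  - lia.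
  - destruct (Nat.eq_dec l n). subst; contradiction. apply IHn; auto. lia. lia.
Qed.

Lemma sumind_le : forall P n, sumind P n <= n.
Proof. intros P n; induction n; simpl; auto. destruct (excluded_middle_informative _); lia. Qed.

Section ML.
Context {T : Type} (lt : T -> T -> Prop).
Hypothesis lt_irr : forall x, ~ lt x x.
Hypothesis lt_tr : forall x y z, lt x y -> lt y z -> lt x z.
Hypothesis lt_tot : forall x y, x <> y -> lt x y \/ lt y x.
Hypothesis countable : exists f : T -> nat, forall x y, f x = f y -> x = y.

Definition Dk (S : T -> Prop) (c : T -> nat) n x := sumind (fun l => exists u, S u /\ le lt u x /\ l <= c u) n.
Definition Ek (S : T -> Prop) (c : T -> nat) n x := sumind (fun l => ~ exists u, S u /\ le lt x u /\ c u <= l) n.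

Lemma Dk_mono : forall S c n x y, le lt x y -> Dk S c n x <= Dk S c n y.
Proof. intros. apply sumind_mono. intros l _ [u [A [B C]]]. exists u; repeat split; auto. eapply le_tr; eauto. Qed.
Lemma Ek_mono : forall S c n x y, le lt x y -> Ek S c n x <= Ek S c n y.
Proof. intros. apply sumind_mono. intros l _ Hn [u [A [B C]]]. apply Hn. exists u; repeat split; auto. eapply le_tr; eauto. Qed.

Lemma part_small : forall beta S c n, (forall x, S x -> c x < n) ->
  (forall x y, S x -> S y -> lt x y -> c x <= c y) -> (forall l, VDs lt beta (fun x => S x /\ c x = l)) ->
  forall x y, le lt x y -> Dk S c n x = Dk S c n y -> Ek S c n x = Ek S c n y ->
  (forall v, ~ itv lt S x y v) \/ x = y \/ exists g, olt g beta /\ FSs lt g (itv lt S x y).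
Proof.
  intros beta S c n Hb Hm Hv x y Hxy HD HE.
  destruct (classic (exists v, itv lt S x y v)) as [[u [Su [Hxu Huy]]]|Hno].
  2:{ left. intros v Hv'. apply Hno; eauto. }
  right.
  assert (HDx : exists w, S w /\ le lt w x /\ c u <= c w).
  { refine (sumind_eq (fun l => exists u, S u /\ le lt u x /\ l <= c u) (fun l => exists u, S u /\ le lt u y /\ l <= c u) n _ HD (c u) (Hb u Su) _).
    - intros l _ [w [A [B C]]]. exists w; repeat split; auto. eapply le_tr; eauto.
    - exists u; repeat split; auto. }
  assert (HEy : exists z, S z /\ le lt y z /\ c z <= c u).
  { apply NNPP. intros Hn.
    refine (sumind_eq (fun l => ~ exists u, S u /\ le lt x u /\ c u <= l) (fun l => ~ exists u, S u /\ le lt y u /\ c u <= l) n _ HE (c u) (Hb u Su) Hn _).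
    - intros l _ Hn' [w [A [B C]]]. apply Hn'. exists w; repeat split; auto. apply (le_tr lt lt_tr x y w); auto.
    - exists u; repeat split; auto. }
  destruct HDx as [w [Sw [Hwx Hcw]]]. destruct HEy as [z [Sz [Hyz Hcz]]].
  assert (Hall : forall v, itv lt S x y v -> c v = c u).
  { intros v [Sv [H1 H2]].
    assert (c w <= c v) by (apply (mono_le_N lt S c Hm w v Sw Sv (le_tr lt lt_tr w x v Hwx H1))).
    assert (c v <= c z) by (apply (mono_le_N lt S c Hm v z Sv Sz (le_tr lt lt_tr v y z H2 Hyz))). lia. }
  assert (Ecw : c w = c u).
  { assert (c w <= c u) by (apply (mono_le_N lt S c Hm w u Sw Su (le_tr lt lt_tr w x u Hwx Hxu))). lia. }
  assert (Ecz : c z = c u).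
  { assert (c u <= c z) by (apply (mono_le_N lt S c Hm u z Su Sz (le_tr lt lt_tr u y z Huy Hyz))). lia. }
  assert (Hwz : le lt w z) by (apply (le_tr lt lt_tr w x z Hwx (le_tr lt lt_tr x y z Hxy Hyz))).
  destruct (interval_lemma lt beta _ (Hv (c u)) w z (conj Sw Ecw) (conj Sz Ecz) Hwz)
    as [E|[g [Hg1 Hg2]]].
  - left. subst z. apply (le_antisym lt lt_irr lt_tr); auto. apply (le_tr lt lt_tr y w x Hyz Hwx).
  - right. exists g; split; auto. eapply FSs_sub. exact Hg2.
    intros v Hv'. pose proof (Hall v Hv') as Ev. destruct Hv' as [Sv [H1 H2]].
    split. split; auto. split. apply (le_tr lt lt_tr w x v Hwx H1). apply (le_tr lt lt_tr v y z H2 Hyz).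
Qed.

Lemma ML : forall beta S1 S2, FSs lt beta S1 -> FSs lt beta S2 -> FSs lt beta (fun x => S1 x \/ S2 x).
Proof.
  intros beta. induction beta as [beta IH] using (well_founded_induction olt_wf).
  intros S1 S2 [n1 [c1 [B1 [M1 V1]]]] [n2 [c2 [B2 [M2 V2]]]].
  set (c := fun x => Dk S1 c1 n1 x + Ek S1 c1 n1 x + Dk S2 c2 n2 x + Ek S2 c2 n2 x).
  apply (final_step lt lt_irr lt_tr lt_tot countable beta _ c (2 * (n1 + n2) + 1)).
  - intros x _. unfold c, Dk, Ek.
    pose proof (sumind_le (fun l => exists u, S1 u /\ le lt u x /\ l <= c1 u) n1).
    pose proof (sumind_le (fun l => ~ exists u, S1 u /\ le lt x u /\ c1 u <= l) n1).
    pose proof (sumind_le (fun l => exists u, S2 u /\ le lt u x /\ l <= c2 u) n2).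
    pose proof (sumind_le (fun l => ~ exists u, S2 u /\ le lt x u /\ c2 u <= l) n2). lia.
  - intros x y _ _ Hxy. unfold c.
    pose proof (Dk_mono S1 c1 n1 x y (or_introl Hxy)). pose proof (Ek_mono S1 c1 n1 x y (or_introl Hxy)).
    pose proof (Dk_mono S2 c2 n2 x y (or_introl Hxy)). pose proof (Ek_mono S2 c2 n2 x y (or_introl Hxy)). lia.
  - intros x y Hx Hy Hxy Hc. unfold c in Hc.
    pose proof (Dk_mono S1 c1 n1 x y Hxy). pose proof (Ek_mono S1 c1 n1 x y Hxy).
    pose proof (Dk_mono S2 c2 n2 x y Hxy). pose proof (Ek_mono S2 c2 n2 x y Hxy).
    destruct (part_small beta S1 c1 n1 B1 M1 V1 x y Hxy ltac:(lia) ltac:(lia)) as [P1|[P1|[g1 [G1 F1]]]];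
    destruct (part_small beta S2 c2 n2 B2 M2 V2 x y Hxy ltac:(lia) ltac:(lia)) as [P2|[P2|[g2 [G2 F2]]]];
    try (left; assumption).
    + exfalso. destruct Hx as [Hx|Hx]; [apply (P1 x)|apply (P2 x)]; repeat split; auto; apply le_refl.
    + right. exists g2; split; auto. eapply FSs_ext. apply (IH g2 G2). 2: exact F2.
      apply FSs_subsingleton. intros u v Hu. exfalso; eapply P1; eauto.
      intros u. unfold itv. tauto.
    + right. exists g1; split; auto. eapply FSs_ext. apply (IH g1 G1). exact F1.
      apply FSs_subsingleton. intros u v Hu. exfalso; eapply P2; eauto.
      intros u. unfold itv. tauto.
    + right. destruct (olt_direct beta g1 g2 G1 G2) as [g [Hg [Hg1 Hg2]]].
      exists g; split; auto. eapply FSs_ext. apply (IH g Hg).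
      exact (FSs_level lt g1 _ F1 g Hg1). exact (FSs_level lt g2 _ F2 g Hg2).
      intros u. unfold itv. tauto.
Qed.

End ML.

Section MLfin.
Context {T : Type} (lt : T -> T -> Prop).
Hypothesis lt_irr : forall x, ~ lt x x.
Hypothesis lt_tr : forall x y z, lt x y -> lt y z -> lt x z.
Hypothesis lt_tot : forall x y, x <> y -> lt x y \/ lt y x.
Hypothesis countable : exists f : T -> nat, forall x y, f x = f y -> x = y.

Lemma ML_fin : forall beta (Si : nat -> T -> Prop) m, (forall j, j < m -> FSs lt beta (Si j)) ->
  FSs lt beta (fun x => exists j, j < m /\ Si j x).
Proof.
  intros beta Si m; induction m; intros H.
  - apply FSs_subsingleton. intros x y [j [Hj _]]; lia.
  - eapply FSs_ext. apply (ML lt lt_irr lt_tr lt_tot countable beta (fun x => exists j, j < m /\ Si j x) (Si m)).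
    apply IHm. intros; apply H; lia. apply H; lia.
    intros x; split.
    + intros [[j [Hj Hs]]|Hs]; exists j || exists m; split; auto; lia.
    + intros [j [Hj Hs]]. destruct (Nat.eq_dec j m). subst; right; auto. left; exists j; split; auto; lia.
Qed.
End MLfin.

Definition subLO (X : LO) (S : car X -> Prop) : LO.
Proof.
  refine (mkLO {x : car X | S x} (fun u v => rel X (proj1_sig u) (proj1_sig v)) _ _ _ _).
  - intros u; apply rel_irrefl.
  - intros u v w; apply rel_trans.
  - intros u v Hne. apply rel_total. intros E. apply Hne. destruct u, v; simpl in *; subst.
    f_equal; apply proof_irrelevance.
  - destruct (car_countable X) as [f Hf]. exists (fun u => f (proj1_sig u)).
    intros u v E. apply Hf in E. destruct u, v; simpl in *; subst. f_equal; apply proof_irrelevance.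
Defined.

Lemma iso_trans : forall X rX Y rY Z rZ, Iso X rX Y rY -> Iso Y rY Z rZ -> Iso X rX Z rZ.
Proof.
  intros X rX Y rY Z rZ [f [[fi fs] fo]] [g [[gi gs] go]]. exists (fun x => g (f x)). split; [split|].
  - intros x y E; auto.
  - intros z. destruct (gs z) as [y Hy]. destruct (fs y) as [x Hx]. exists x; congruence.
  - intros x y. rewrite fo, go. tauto.
Qed.

Lemma FinSum_iso : forall P (X Y : LO), FinSumOf P X -> Iso (car X) (rel X) (car Y) (rel Y) -> FinSumOf P Y.
Proof.
  intros P X Y [n [F [HF Hs]]] Hi. exists n, F. split; auto. eapply iso_trans; eauto.
Qed.

Lemma subLO_full_iso : forall X, Iso (car (subLO X (fun _ => True))) (rel (subLO X (fun _ => True))) (car X) (rel X).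
Proof.
  intros X. exists (fun u => proj1_sig u). split; [split|].
  - intros [x p] [y q]; simpl; intros E; subst. f_equal; apply proof_irrelevance.
  - intros y. exists (exist _ y I). reflexivity.
  - intros u v; simpl; tauto.
Qed.

Lemma sum_iso : forall (X : LO) (S : car X -> Prop) (I : Type) (ltI : I -> I -> Prop) (blk : car X -> I),
  (forall i, ~ ltI i i) -> (forall i j, ltI i j -> ~ ltI j i) ->
  (forall x y, S x -> S y -> rel X x y -> blk x = blk y \/ ltI (blk x) (blk y)) ->
  IsSum I ltI (fun i => subLO X (fun x => S x /\ blk x = i)) (subLO X S).
Proof.
  intros X S I ltI blk Hirr Has Hm.
  exists (fun s => match s with existT _ i u => exist S (proj1_sig u) (proj1 (proj2_sig u)) end).
  split; [split|].
  - intros [i [x [p e]]] [j [y [q e']]]; simpl. intros E. injection E; intros; subst.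
    assert (p = q) by apply proof_irrelevance. subst. reflexivity.
  - intros [x p]. exists (existT _ (blk x) (exist _ x (conj p eq_refl))). simpl. apply eq_sig_hprop. intros; apply proof_irrelevance. reflexivity.
  - intros [i [x [p e]]] [j [y [q e']]]; simpl. unfold lexlt; simpl. split.
    + intros [H|[E H]].
      * subst. destruct (classic (x = y)) as [Exy|Nxy]. subst; exfalso; eapply Hirr; eauto.
        destruct (rel_total X x y Nxy) as [H'|H']; auto.
        destruct (Hm y x q p H') as [E|E]. rewrite E in H; exfalso; eapply Hirr; eauto.
        exfalso; eapply Has; eauto.
      * destruct E. simpl in H. exact H.
    + intros H. destruct (Hm x y p q H) as [E|E].
      * right. assert (Hij : i = j) by congruence. revert Hij. intros ->. exists eq_refl. simpl. exact H.
      * left. subst. exact E.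
Qed.

Lemma VDs_to_VD : forall (X : LO) a S, VDs (rel X) a S -> VD a (subLO X S).
Proof.
  intros X a S H; induction H.
  - apply VD_zero. intros [x p]. eapply H; eauto.
  - apply VD_one. exists (exist _ x H). intros [y q]. simpl in *. pose proof (H0 y q). subst.
    f_equal; apply proof_irrelevance.
  - apply (VD_zeta a (subLO X S) (fun z => subLO X (fun x => S x /\ blk x = z))).
    + intros z. exists (b z); split; auto.
    + apply sum_iso. intros i; lia. intros; lia.
      intros x y Hx Hy Hxy. specialize (H x y Hx Hy Hxy). lia.
Qed.

Lemma FSs_to_FinSum : forall (X : LO) a S, FSs (rel X) a S -> FinSumOf (VD a) (subLO X S).
Proof.
  intros X a S [n [c [Hb [Hm Hv]]]].
  set (blk := fun x => match lt_dec (c x) n with left h => exist (fun k => k < Datatypes.S n) (c x) (Nat.lt_lt_succ_r _ _ h)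
                                    | right _ => exist (fun k => k < Datatypes.S n) n (Nat.lt_succ_diag_r n) end).
  assert (Hbv : forall x, S x -> proj1_sig (blk x) = c x).
  { intros x Hx. unfold blk. destruct (lt_dec (c x) n). reflexivity. exfalso; apply n0; auto. }
  exists (Datatypes.S n), (fun i => subLO X (fun x => S x /\ blk x = i)). split.
  - intros [k hk]. apply VDs_to_VD. eapply VDs_ext. apply (Hv k).
    intros x; split.
    + intros [Hx Hc]. split; auto. apply eq_sig_hprop. intros; apply proof_irrelevance.
      simpl. rewrite Hbv; auto.
    + intros [Hx Hc]. split; auto. rewrite <- Hbv; auto. rewrite Hc. reflexivity.
  - apply sum_iso.
    + intros i; unfold fin_lt; lia.
    + intros i j; unfold fin_lt; lia.
    + intros x y Hx Hy Hxy. specialize (Hm x y Hx Hy Hxy).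
      destruct (Nat.eq_dec (c x) (c y)) as [E|E].
      * left. apply eq_sig_hprop. intros; apply proof_irrelevance. rewrite !Hbv; auto.
      * right. unfold fin_lt. rewrite !Hbv; auto. lia.
Qed.

Definition VD_ind' (P : ord -> LO -> Prop)
 (Hz : forall a A, (car A -> False) -> P a A)
 (Ho : forall a A, (exists x : car A, forall y, y = x) -> P a A)
 (Hf : forall a A n F, (forall i, exists b, olt b a /\ P b (F i)) -> IsSum (fin_idx n) fin_lt F A -> P a A)
 (Hw : forall a A F, (forall i, exists b, olt b a /\ P b (F i)) -> IsSum nat Peano.lt F A -> P a A)
 (Hws : forall a A F, (forall i, exists b, olt b a /\ P b (F i)) -> IsSum nat (fun i j => (j < i)%nat) F A -> P a A)
 (Hzt : forall a A F, (forall i, exists b, olt b a /\ P b (F i)) -> IsSum Z Z.lt F A -> P a A)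
 : forall a A, VD a A -> P a A :=
 fix rec a A (d : VD a A) {struct d} : P a A :=
 match d with
 | VD_zero a A h => Hz a A h
 | VD_one a A h => Ho a A h
 | VD_fin a A n F h s => Hf a A n F (fun i => match h i with ex_intro _ b (conj hb hv) => ex_intro _ b (conj hb (rec b (F i) hv)) end) s
 | VD_omega a A F h s => Hw a A F (fun i => match h i with ex_intro _ b (conj hb hv) => ex_intro _ b (conj hb (rec b (F i) hv)) end) s
 | VD_omegastar a A F h s => Hws a A F (fun i => match h i with ex_intro _ b (conj hb hv) => ex_intro _ b (conj hb (rec b (F i) hv)) end) s
 | VD_zeta a A F h s => Hzt a A F (fun i => match h i with ex_intro _ b (conj hb hv) => ex_intro _ b (conj hb (rec b (F i) hv)) end) s
 end.

Definition img {X T} (f : X -> T) (t : T) := exists x, f x = t.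

Lemma emb_inj : forall (A : LO) T (lt : T -> T -> Prop) (e : car A -> T),
  (forall x y, rel A x y <-> lt (e x) (e y)) -> forall x y, e x = e y -> x = y.
Proof.
  intros A T lt e He x y E. apply NNPP; intros Hne.
  destruct (rel_total A x y Hne) as [H|H]; apply He in H; rewrite E in H; apply He in H; eapply rel_irrefl; eauto.
Qed.

Lemma sum_blocks : forall (A : LO) (I : Type) (ltI : I -> I -> Prop) (F : I -> LO) (ix : I -> Z)
  T (lt : T -> T -> Prop) (e : car A -> T),
  (forall i j, ltI i j -> (ix i < ix j)%Z) -> (forall i j, ix i = ix j -> i = j) ->
  IsSum I ltI F A -> (forall x y, rel A x y <-> lt (e x) (e y)) ->
  exists blk : T -> Z,
   (forall t t', img e t -> img e t' -> lt t t' -> (blk t <= blk t')%Z) /\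
   (forall t, img e t -> exists i, ix i = blk t) /\
   (forall i, exists ei : car (F i) -> T, (forall y y', rel (F i) y y' <-> lt (ei y) (ei y')) /\
       forall t, (img e t /\ blk t = ix i) <-> img ei t).
Proof.
  intros A I ltI F ix T lt e Hix Hinj [phi [[phi_i phi_s] phi_o]] He.
  pose proof (emb_inj A T lt e He) as einj.
  assert (Hb : forall t, exists z, forall s, e (phi s) = t -> ix (projT1 s) = z).
  { intros t. destruct (classic (exists s, e (phi s) = t)) as [[s Hs]|Hn].
    - exists (ix (projT1 s)). intros s' Hs'. rewrite <- Hs in Hs'. apply einj, phi_i in Hs'. subst; auto.
    - exists 0%Z. intros s Hs; exfalso; eauto. }
  apply fchoice in Hb. destruct Hb as [blk Hblk].
  exists blk. split; [|split].
  - intros t t' [x Hx] [x' Hx'] Hlt. destruct (phi_s x) as [s Hs]. destruct (phi_s x') as [s' Hs'].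
    subst. rewrite <- (Hblk _ s eq_refl), <- (Hblk _ s' eq_refl).
    apply He, phi_o in Hlt. destruct Hlt as [H|[E H]]. apply Hix in H; lia. rewrite E; lia.
  - intros t [x Hx]. destruct (phi_s x) as [s Hs]. subst. exists (projT1 s). apply Hblk; auto.
  - intros i. exists (fun y => e (phi (existT _ i y))). split.
    + intros y y'. rewrite <- He, <- phi_o. unfold lexlt; simpl. split.
      * intros H. right. exists eq_refl. exact H.
      * intros [H|[E H]]. apply Hix in H; lia.
        rewrite (proof_irrelevance _ E eq_refl) in H. exact H.
    + intros t. split.
      * intros [[x Hx] Hbt]. destruct (phi_s x) as [[j y] Hs]. subst.
        rewrite <- (Hblk _ _ eq_refl) in Hbt. simpl in Hbt. apply Hinj in Hbt. subst. exists y; auto.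
      * intros [y Hy]. subst. split. eexists; eauto. apply eq_sym, (Hblk _ (existT _ i y)); auto.
Qed.

Lemma VD_to_VDs_gen : forall a (A : LO) (I : Type) (ltI : I -> I -> Prop) (F : I -> LO) (ix : I -> Z),
  (forall i j, ltI i j -> (ix i < ix j)%Z) -> (forall i j, ix i = ix j -> i = j) ->
  (forall i, exists b, olt b a /\ forall T (lt : T -> T -> Prop) (e : car (F i) -> T),
      (forall x y, rel (F i) x y <-> lt (e x) (e y)) -> VDs lt b (img e)) ->
  IsSum I ltI F A ->
  forall T (lt : T -> T -> Prop) (e : car A -> T), (forall x y, rel A x y <-> lt (e x) (e y)) -> VDs lt a (img e).
Proof.
  intros a A I ltI F ix Hix Hinj IH Hs T lt e He.
  destruct (sum_blocks A I ltI F ix T lt e Hix Hinj Hs He) as [blk [Hm [Hr Hbl]]].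
  destruct (classic (exists t, img e t)) as [[t0 Ht0]|Hno].
  2:{ apply VDs_zero. intros t Ht; apply Hno; eauto. }
  destruct (Hr t0 Ht0) as [i0 _]. destruct (IH i0) as [b0 [Hb0 _]].
  apply (VDs_sum' lt a (img e) blk Hm).
  intros z. destruct (classic (exists i, ix i = z)) as [[i Hi]|Hn].
  - subst z. destruct (IH i) as [b [Hb HV]]. destruct (Hbl i) as [ei [Hei Himg]].
    exists b; split; auto. eapply VDs_ext. apply (HV T lt ei Hei). intros t; rewrite Himg; tauto.
  - exists b0; split; auto. apply VDs_zero. intros t [Ht Hz]. destruct (Hr t Ht) as [i Hi].
    apply Hn. exists i. congruence.
Qed.

Lemma VD_to_VDs : forall a (A : LO), VD a A ->
  forall T (lt : T -> T -> Prop) (e : car A -> T), (forall x y, rel A x y <-> lt (e x) (e y)) -> VDs lt a (img e).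
Proof.
  apply (VD_ind' (fun a A => forall T (lt : T -> T -> Prop) (e : car A -> T), (forall x y, rel A x y <-> lt (e x) (e y)) -> VDs lt a (img e))).
  - intros a A H T lt e He. apply VDs_zero. intros t [x _]. auto.
  - intros a A [x0 H] T lt e He. apply (VDs_one _ _ _ (e x0)). exists x0; auto.
    intros t [x Hx]. subst. rewrite (H x). reflexivity.
  - intros a A n F IH Hs. apply (VD_to_VDs_gen a A _ fin_lt F (fun i => Z.of_nat (proj1_sig i))); auto.
    + intros i j; unfold fin_lt; lia.
    + intros [i p] [j q]; simpl; intros E. assert (i = j) by lia. subst. f_equal; apply proof_irrelevance.
  - intros a A F IH Hs. apply (VD_to_VDs_gen a A _ Peano.lt F Z.of_nat); auto.
    + intros i j; lia.
    + intros i j; lia.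
  - intros a A F IH Hs. apply (VD_to_VDs_gen a A _ (fun i j => (j < i)%nat) F (fun i => (- Z.of_nat i)%Z)); auto.
    + intros i j; lia.
    + intros i j; lia.
  - intros a A F IH Hs. apply (VD_to_VDs_gen a A _ Z.lt F (fun i => i)); auto.
Qed.

Lemma FinSum_to_FSs : forall a (A : LO), FinSumOf (VD a) A ->
  forall T (lt : T -> T -> Prop) (e : car A -> T), (forall x y, rel A x y <-> lt (e x) (e y)) -> FSs lt a (img e).
Proof.
  intros a A [n [F [HF Hs]]] T lt e He.
  destruct (sum_blocks A _ fin_lt F (fun i => Z.of_nat (proj1_sig i)) T lt e) as [blk [Hm [Hr Hbl]]]; auto.
  { intros i j; unfold fin_lt; lia. }
  { intros [i p] [j q]; simpl; intros E. assert (i = j) by lia. subst. f_equal; apply proof_irrelevance. }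
  exists n, (fun t => Z.to_nat (blk t)). split; [|split].
  - intros t Ht. destruct (Hr t Ht) as [[i p] Hi]. simpl in Hi. lia.
  - intros t t' Ht Ht' Hlt. specialize (Hm t t' Ht Ht' Hlt). lia.
  - intros k. destruct (lt_dec k n) as [Hk|Hk].
    + destruct (Hbl (exist _ k Hk)) as [ei [Hei Himg]]. eapply VDs_ext.
      apply (VD_to_VDs a (F (exist _ k Hk)) (HF _) T lt ei Hei).
      intros t. rewrite <- Himg. simpl. split; intros [Ht Hb]; split; auto.
      * lia.
      * destruct (Hr t Ht) as [[i p] Hi]. simpl in Hi. lia.
    + apply VDs_zero. intros t [Ht Hb]. destruct (Hr t Ht) as [[i p] Hi]. simpl in Hi. lia.
Qed.

Theorem corollary4p9 (a : ord) (A : LO) (n : nat) (B : fin_idx n -> LO) :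
  (1 <= n)%nat ->
  scattered A ->
  VDstar_is A a ->
  sum_augmentation A n B ->
  exists i : fin_idx n, scattered (B i) /\ VDstar_is (B i) a.
Proof.
  intros Hn Hsc [HFA Hmin] [part Hiso].
  pose proof (rel_irrefl A) as lirr. pose proof (rel_trans A) as ltr.
  pose proof (rel_total A) as ltot. pose proof (car_countable A) as lcnt.
  assert (HFSA : FSs (rel A) a (fun _ => True)).
  { eapply FSs_ext. apply (FinSum_to_FSs a A HFA (car A) (rel A) (fun x => x)). intros; tauto.
    intros t; split; auto. intros _; exists t; auto. }
  assert (Emb : forall i, exists e : car (B i) -> car A, (forall y y', rel (B i) y y' <-> rel A (e y) (e y')) /\
                 forall t, img e t <-> part t = i).
  { intros i. destruct (Hiso i) as [f [[fi fs] fo]].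
    apply fchoice in fs. destruct fs as [g Hg].
    exists (fun y => proj1_sig (g y)). split.
    - intros y y'. rewrite <- (Hg y) at 1. rewrite <- (Hg y') at 1. rewrite <- fo. tauto.
    - intros t; split.
      + intros [y Hy]. subst. apply (proj2_sig (g y)).
      + intros Ht. set (u := exist (fun x => part x = i) t Ht). exists (f u).
        assert (g (f u) = u) by (apply fi; apply Hg). rewrite H. reflexivity. }
  assert (Equiv1 : forall i b, FinSumOf (VD b) (B i) -> FSs (rel A) b (fun x => part x = i)).
  { intros i b H. destruct (Emb i) as [e [He Hi]]. eapply FSs_ext.
    apply (FinSum_to_FSs b (B i) H (car A) (rel A) e He). exact Hi. }
  assert (Equiv2 : forall i b, FSs (rel A) b (fun x => part x = i) -> FinSumOf (VD b) (B i)).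
  { intros i b H. eapply FinSum_iso. apply (FSs_to_FinSum A b _ H). exact (Hiso i). }
  assert (Scat : forall i, scattered (B i)).
  { intros i [h Hh]. apply Hsc. destruct (Emb i) as [e [He Hi]]. exists (fun q => e (h q)).
    intros p q Hpq. apply He. auto. }
  apply NNPP. intros Hno.
  assert (Hlow : forall i, exists b, olt b a /\ FSs (rel A) b (fun x => part x = i)).
  { intros i. assert (HF : FinSumOf (VD a) (B i)).
    { apply Equiv2. apply (FSs_sub _ a _ HFSA). intros; auto. }
    destruct (classic (exists b, olt b a /\ FinSumOf (VD b) (B i))) as [[b [Hb1 Hb2]]|Hnb].
    - exists b; split; auto.
    - exfalso. apply Hno. exists i. split; auto. split; auto.
      intros b Hb Hf. apply Hnb. eauto. }
  apply fchoice in Hlow. destruct Hlow as [h Hh].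
  set (G := fun j => match lt_dec j n with left p => h (exist _ j p) | right _ => OZ end).
  destruct (olt_direct_fin a G (n - 1)) as [c [Hc HGc]].
  { intros j Hj. unfold G. destruct (lt_dec j n). apply Hh. lia. }
  assert (Hparts : forall j, j < n -> FSs (rel A) c (fun x => proj1_sig (part x) = j)).
  { intros j Hj. specialize (HGc j ltac:(lia)). unfold G in HGc. destruct (lt_dec j n) as [p|p]; [|lia].
    eapply FSs_ext. eapply FSs_level. apply (proj2 (Hh (exist _ j p))). exact HGc.
    intros x; split.
    - intros E. rewrite E. reflexivity.
    - intros E. apply eq_sig_hprop. intros; apply proof_irrelevance. exact E. }
  pose proof (ML_fin (rel A) lirr ltr ltot lcnt c (fun j x => proj1_sig (part x) = j) n Hparts) as Hall.
  apply (Hmin c Hc). eapply FinSum_iso. apply (FSs_to_FinSum A c (fun _ => True)).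
  - eapply FSs_ext. exact Hall. intros x; split; auto. intros _. exists (proj1_sig (part x)).
    split; auto. apply (proj2_sig (part x)).
  - apply subLO_full_iso.
Qed.
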